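(* Let $G$ be the final graph produced by the uncoordinated construction (described in the context) on a finite point set $P\subset\mathbb{R}^d$ with parameter $s>1$. Then: (1) For any two distinct points $p,q\in P$ such that $pq$ is not an edge of $G$, there is an edge $p'q'$ of $G$ with $|pp'|\le |p'q'|/(2s+2)$ and $|qq'|\le |p'q'|/(2s+2)$. (2) For any two distinct edges $pq$ and $p'q'$ of $G$ such that $pq$ was built before $p'q'$, either $|pp'|>|pq|/(2s+2)$ or $|qq'|>|pq|/(2s+2)$.
   Context: Fix $d\ge 1$. Let $P\subset\mathbb{R}^d$ be a finite set of $n\ge 2$ points, $|xy|$ the Euclidean distance, and $s>1$ a parameter. Uncoordinated construction: start with the graph $G$ on vertex set $P$ with no edges (edges are undirected straight segments). Every ordered pair $(p,q)$ of distinct points of $P$ is processed exactly once, in a completely arbitrary order, and no two pairs are processed simultaneously. When $(p,q)$ is processed (by agent $p$), the edge $pq$ is added to $G$ unless $G$ currently contains an edge whose endpoints can be labeled $p',q'$ so that $|pp'|\le |p'q'|/(2s+2)$ and $|qq'|\le |p'q'|/(2s+2)$; in that case $pq$ is not built. The final graph $G$ is the graph after all ordered pairs have been processed. *)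

(* Defs.v *)
(* Points of R^d are row vectors 'rV[R]_d over a real closed field R. *)
From HB Require Import structures.
From mathcomp Require Import all_boot all_order all_algebra.
Set Implicit Arguments. Unset Strict Implicit. Unset Printing Implicit Defensive.
Import Order.TTheory GRing.Theory Num.Theory.
Local Open Scope ring_scope.

Section Construction.
Variables (R : rcfType) (d : nat).
Notation pt := 'rV[R]_d.

Definition edist (x y : pt) : R := Num.sqrt (\sum_(i < d) (x 0 i - y 0 i) ^+ 2).

(* the labeled edge a b (p' := a, q' := b) satisfies
   |p a| <= |a b|/(2s+2) and |q b| <= |a b|/(2s+2) *)
Definition close (s : R) (p q a b : pt) : bool :=
  (edist p a <= edist a b / (2 * s + 2)) && (edist q b <= edist a b / (2 * s + 2)).

Definition blocked (s : R) (G : seq (pt * pt)) (p q : pt) : bool :=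
  has (fun e => close s p q e.1 e.2 || close s p q e.2 e.1) G.

Definition step (s : R) (G : seq (pt * pt)) (pq : pt * pt) : seq (pt * pt) :=
  if blocked s G pq.1 pq.2 then G else rcons G pq.

(* final graph: list of edges (undirected, stored as the processed ordered
   pair), in the order they were built *)
Definition build (s : R) (order : seq (pt * pt)) : seq (pt * pt) :=
  foldl (step s) [::] order.

Definition ordered_pairs (P : seq pt) : seq (pt * pt) :=
  filter (fun e => e.1 != e.2) [seq (x, y) | x <- P, y <- P].

Definition is_edge (G : seq (pt * pt)) (x y : pt) : Prop :=
  (x, y) \in G \/ (y, x) \in G.

Definition edge_at (G : seq (pt * pt)) (i : nat) (x y : pt) : Prop :=
  (i < size G)%N /\ (nth (x, y) G i = (x, y) \/ nth (x, y) G i = (y, x)).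

End Construction.

(* Main.v *)
Require Import Defs.
From HB Require Import structures.
From mathcomp Require Import all_boot all_order all_algebra.
Import Order.TTheory GRing.Theory Num.Theory.
Local Open Scope ring_scope.

Lemma edistC {R : rcfType} {d} (x y : 'rV[R]_d) : edist x y = edist y x.
Proof. rewrite /edist; congr Num.sqrt; apply: eq_bigr => i _; by rewrite -sqrrN opprB. Qed.

Lemma foldl_step_cat {R : rcfType} {d} (s : R) (G l : seq ('rV[R]_d * 'rV[R]_d)) :
  exists t, foldl (step s) G l = G ++ t.
Proof.
elim: l G => [|x l IH] G /=; first by exists [::]; rewrite cats0.
have [t ->] := IH (step s G x).
rewrite /step; case: blocked; first by exists t.
by exists (x :: t); rewrite -cats1 -catA.
Qed.

Definition Inv {R : rcfType} {d} (s : R) (G : seq ('rV[R]_d * 'rV[R]_d)) :=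
  forall j x0, (j < size G)%N -> ~~ blocked s (take j G) (nth x0 G j).1 (nth x0 G j).2.

Lemma inv_foldl {R : rcfType} {d} (s : R) (G l : seq ('rV[R]_d * 'rV[R]_d)) :
  Inv s G -> Inv s (foldl (step s) G l).
Proof.
elim: l G => [|x l IH] G //= HG; apply: IH.
rewrite /step; case Hb: blocked => //.
move=> j x0; rewrite size_rcons ltnS leq_eqVlt => /orP [/eqP ->|Hj].
  by rewrite nth_rcons ltnn eqxx -cats1 take_size_cat // Hb.
by rewrite nth_rcons Hj -cats1 takel_cat ?HG // ltnW.
Qed.

Theorem lemma1 (R : rcfType) (d : nat) (P : seq 'rV[R]_d) (s : R)
    (order : seq ('rV[R]_d * 'rV[R]_d)) :
  (1 <= d)%N -> uniq P -> (2 <= size P)%N -> 1 < s ->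
  perm_eq order (ordered_pairs P) ->
  let G := build s order in
  (forall p q, p \in P -> q \in P -> p != q -> ~ is_edge G p q ->
     exists p' q', is_edge G p' q' /\
       edist p p' <= edist p' q' / (2 * s + 2) /\
       edist q q' <= edist p' q' / (2 * s + 2)) /\
  (forall (i j : nat) p q p' q', (i < j)%N -> edge_at G i p q -> edge_at G j p' q' ->
     edist p p' > edist p q / (2 * s + 2) \/ edist q q' > edist p q / (2 * s + 2)).
Proof.
move=> _ _ _ _ Hperm G; rewrite {}/G; split.
  move=> p q pP qP pq NE.
  have : (p, q) \in order.
    rewrite (perm_mem Hperm) /ordered_pairs mem_filter /= pq /=.
    by apply: allpairs_f.
  move=> Hin.
  have [o1 [o2 Eo]] : exists o1 o2, order = o1 ++ (p, q) :: o2.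
    by case/splitPr: Hin => o1 o2; exists o1, o2.
  rewrite /build Eo foldl_cat in NE *.
  set G1 := foldl (step s) [::] o1.
  have [t Ht] := foldl_step_cat s G1 ((p, q) :: o2).
  case Hb: (blocked s G1 p q).
    move/hasP: Hb => [e eG /orP [/andP [H1 H2]|/andP [H1 H2]]].
      exists e.1, e.2; split => //; left; rewrite Ht mem_cat; case: e eG {H1 H2} => a b ->; done.
    exists e.2, e.1; split => //; right; rewrite Ht mem_cat; case: e eG {H1 H2} => a b ->; done.
  exfalso; apply: NE; left.
  have -> : foldl (step s) G1 ((p, q) :: o2) = foldl (step s) (rcons G1 (p, q)) o2 by rewrite /= [step s G1 _]/step /= Hb.
  have [t' ->] := foldl_step_cat s (rcons G1 (p, q)) o2.
  by rewrite mem_cat mem_rcons mem_head.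
move=> i j p q p' q' ij [iG ei] [jG ej].
have HI : Inv s (build s order) by apply: inv_foldl => j0 x0.
set G := build s order in HI iG jG ei ej *.
have nb := HI j (p', q') jG.
have ein : nth (p, q) G i \in take j G.
  rewrite -(nth_take _ ij); apply: mem_nth; rewrite size_take.
  by case: ifP.
have := hasPn nb _ ein => /= {nb} nb.
rewrite !ltNge.
case: ei => ei; case: ej => ej; move: nb; rewrite ei ej /=; rewrite /close /= ?(edistC p' p) ?(edistC q' q) ?(edistC q p) ?(edistC q' p) ?(edistC p' q);
 case: (edist p p' <= _); case: (edist q q' <= _); rewrite /= ?andbF ?orbT ?orbF; auto.
Qed.
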